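(* Let $m\ge1$ and let $V\subset(\mathbb C^N)^{\otimes m}$ be the subspace of traceless tensors. Let $(\mathbb C^N)^{\otimes(m+1)}$ be acted on by $\mathrm{End}(\mathbb C^N)\otimes U(\mathfrak{gl}_N)$, where $\mathrm{End}(\mathbb C^N)$ acts on the first tensor factor and $U(\mathfrak{gl}_N)$ acts on the last $m$ factors via $E_{ij}\mapsto\sum_{p=1}^m 1^{\otimes(p-1)}\otimes E_{ij}\otimes1^{\otimes(m-p)}$. Then the action of the element $$\frac{\tilde E(\eta-u)\,E(\eta+u)}{u-\eta}\in\mathrm{End}(\mathbb C^N)\otimes U(\mathfrak{gl}_N)(u)$$ on $(\mathbb C^N)^{\otimes(m+1)}$ preserves the subspace $\mathbb C^N\otimes V$, and on this subspace it coincides with the action of $F(u)\in\mathrm{End}(\mathbb C^N)\otimes U(\mathfrak g)[u]$ (with $U(\mathfrak g)\subset U(\mathfrak{gl}_N)$ acting by restriction).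
   Context: $M=\lfloor N/2\rfloor$. Index set $I=\{-M,\dots,-1,1,\dots,M\}$ if $N=2M$, $I=\{-M,\dots,-1,0,1,\dots,M\}$ if $N=2M+1$; $e_i$ ($i\in I$) basis of $\mathbb C^N$, $E_{ij}$ matrix units. $G=O_N$ is the subgroup of $GL_N$ preserving the symmetric form $\langle e_i,e_j\rangle=\delta_{i,-j}$, or $G=Sp_N$ ($N$ even) preserving the alternating form $\langle e_i,e_j\rangle=\delta_{i,-j}\operatorname{sgn}i$; $\mathfrak g\subset\mathfrak{gl}_N$ its Lie algebra. $\varepsilon_{ij}=\operatorname{sgn}i\operatorname{sgn}j$ for $Sp_N$, $1$ for $O_N$; $F_{ij}=E_{ij}-\varepsilon_{ij}E_{-j,-i}$; $\eta=\frac12$ if $\mathfrak g=\mathfrak{so}_N$, $\eta=-\frac12$ if $\mathfrak g=\mathfrak{sp}_N$. $E(u)=-u+\sum_{i,j}E_{ij}\otimes E_{ji}$, $\tilde E(u)=-u+\sum_{i,j}\varepsilon_{ij}E_{ij}\otimes E_{-i,-j}$ (in $\mathrm{End}(\mathbb C^N)\otimes U(\mathfrak{gl}_N)[u]$), $F(u)=-u-\eta+\sum_{i,j}E_{ij}\otimes F_{ji}$. A tensor $t\in(\mathbb C^N)^{\otimes m}$ is traceless if for every pair of distinct positions $p\ne q$, applying the form $\langle\,,\rangle$ to the $p$-th and $q$-th tensor factors of $t$ gives $0\in(\mathbb C^N)^{\otimes(m-2)}$. *)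

(* Defs.v *)
From HB Require Import structures.
From mathcomp Require Import all_boot all_order all_algebra all_field.
Set Implicit Arguments. Unset Strict Implicit. Unset Printing Implicit Defensive.
Import Order.TTheory GRing.Theory Num.Theory.
Local Open Scope ring_scope.

(* Index set I.  We use 'I_N = {0..N-1} with the order-preserving labelling
   lab : 'I_N -> int onto I = {-M..-1,(0),1..M}, M = N./2 (0 only if N odd). *)
Definition lab (N : nat) (i : 'I_N) : int :=
  if odd N then (i%:Z - (N./2)%:Z)
  else if (i < N./2)%N then i%:Z - (N./2)%:Z else i%:Z - (N./2)%:Z + 1.

(* the index -i; rev_ord satisfies lab (neg i) = - lab i *)
Definition neg (N : nat) (i : 'I_N) : 'I_N := rev_ord i.

(* G = O_N (Orth) or Sp_N (Symp, N even) *)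
Inductive grp := Orth | Symp.

Definition sgnI (N : nat) (i : 'I_N) : algC := (Num.sg (lab i))%:~R.

Definition eps (g : grp) (N : nat) (i j : 'I_N) : algC :=
  if g is Symp then sgnI i * sgnI j else 1.

Definition eta (g : grp) : algC := if g is Orth then 2^-1 else - 2^-1.

Definition form (g : grp) (N : nat) (i j : 'I_N) : algC :=
  if lab i == - lab j then (if g is Symp then sgnI i else 1) else 0.

(* basis words of length m; (C^N)^{(x) m} as coordinate functions on words *)
Notation word N m := ({ffun 'I_m -> 'I_N}).
Notation T0 N m := ({ffun word N m -> algC}).
(* C^N (x) (C^N)^{(x) m} = (C^N)^{(x)(m+1)}, first factor separated *)
Notation T1 N m := ({ffun 'I_N * word N m -> algC}).

Definition scl (A : finType) (c : algC) (f : {ffun A -> algC}) : {ffun A -> algC} :=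
  [ffun x => c * f x].

Definition setw (N m : nat) (w : word N m) (p : 'I_m) (k : 'I_N) : word N m :=
  [ffun q => if q == p then k else w q].

(* action of E_ij in U(gl_N) on (C^N)^{(x) m}: sum over positions p *)
Definition rhoE (N m : nat) (i j : 'I_N) (t : T0 N m) : T0 N m :=
  [ffun w : word N m => \sum_(p < m) (w p == i)%:R * t (setw w p j)].

Definition slice (N m : nat) (T : T1 N m) (b : 'I_N) : T0 N m :=
  [ffun w : word N m => T (b, w)].

(* action of A (x) B, A in End(C^N) (matrix), B an operator on (C^N)^{(x) m} *)
Definition act (N m : nat) (A : 'M[algC]_N) (B : T0 N m -> T0 N m)
  (T : T1 N m) : T1 N m :=
  [ffun x : 'I_N * word N m => \sum_(b < N) A x.1 b * B (slice T b) x.2].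

Definition Eop (N m : nat) (u : algC) (T : T1 N m) : T1 N m :=
  scl (- u) T + \sum_(i < N) \sum_(j < N) act (delta_mx i j) (@rhoE N m j i) T.

Definition Etil (g : grp) (N m : nat) (u : algC) (T : T1 N m) : T1 N m :=
  scl (- u) T + \sum_(i < N) \sum_(j < N)
     scl (eps g i j) (act (delta_mx i j) (@rhoE N m (neg i) (neg j)) T).

Definition rhoF (g : grp) (N m : nat) (i j : 'I_N) (t : T0 N m) : T0 N m :=
  rhoE i j t - scl (eps g i j) (rhoE (neg j) (neg i) t).

Definition Fop (g : grp) (N m : nat) (u : algC) (T : T1 N m) : T1 N m :=
  scl (- u - eta g) T + \sum_(i < N) \sum_(j < N)
     act (delta_mx i j) (@rhoF g N m j i) T.

Definition traceless (g : grp) (N m : nat) (t : T0 N m) : Prop :=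
  forall p q : 'I_m, p != q -> forall w : word N m,
    \sum_(i < N) \sum_(j < N) form g i j * t (setw (setw w p i) q j) = 0.

Definition inCV (g : grp) (N m : nat) (T : T1 N m) : Prop :=
  forall a : 'I_N, traceless g (slice T a).

(* Main.v *)
Require Import Defs.
From mathcomp Require Import all_boot all_order all_algebra all_field.
From mathcomp Require Import zify ring.
Import GRing.Theory Num.Theory.
Import Defs.
Set Implicit Arguments. Unset Strict Implicit.
Local Open Scope ring_scope.

Lemma lab_neg N (i : 'I_N) : lab (neg i) = - lab i.
Proof.
rewrite /lab /neg /=; have := odd_double_half N; have := ltn_ord i.
case: (odd N) => /= hi hN.
  rewrite subnS; lia.
case: ltnP => h1; case: ltnP => h2; rewrite ?subnS; lia.
Qed.

Lemma lab_inj N : injective (@lab N).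
Proof.
move=> i j; rewrite /lab; have := odd_double_half N.
case: (odd N) => /= hN.
  move=> h; apply/val_inj => /=; lia.
case: ltnP => h1; case: ltnP => h2 h; apply/val_inj => /=; lia.
Qed.

Lemma lab_neq0 N (i : 'I_N) : ~~ odd N -> lab i != 0.
Proof.
rewrite /lab; have := odd_double_half N; case: (odd N) => //= hN _.
case: ltnP => h1; lia.
Qed.

Lemma f1 (N:nat) (f g : {ffun 'I_N -> algC}) x : (f - g) x = f x - g x.
Proof. by rewrite !ffunE. Qed.

Definition sgg (g : grp) N (i : 'I_N) : algC := if g is Symp then sgnI i else 1.
Definition cg (g : grp) : algC := if g is Symp then -1 else 1.

Lemma negK N : involutive (@neg N).
Proof. by move=> i; rewrite /neg rev_ordK. Qed.

Lemma neg_inj N : injective (@neg N).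
Proof. exact: can_inj (@negK N). Qed.

Lemma eq_neg N (i j : 'I_N) : (lab i == - lab j) = (i == neg j).
Proof.
apply/eqP/eqP => [h|->]; last by rewrite lab_neg.
by apply: lab_inj; rewrite lab_neg.
Qed.

Lemma formE g N (i j : 'I_N) : form g i j = (j == neg i)%:R * sgg g i.
Proof.
rewrite /form eq_neg; case: (eqVneq i (neg j)) => [->|h].
  by rewrite negK eqxx mul1r.
case: eqVneq => [e|]; last by rewrite mul0r.
by case/eqP: h; rewrite e negK.
Qed.

Lemma epsE g N (i j : 'I_N) : eps g i j = sgg g i * sgg g j.
Proof. by case: g => //=; rewrite mulr1. Qed.

Lemma sgg_neg g N (i : 'I_N) : sgg g (neg i) = cg g * sgg g i.
Proof.
case: g => /=; rewrite ?mul1r // /sgnI lab_neg sgrN.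
by rewrite mulrNz mulN1r.
Qed.

Lemma cg_eta g : cg g = 2 * eta g.
Proof.
have h2 : (2 : algC) != 0 by rewrite pnatr_eq0.
by case: g => /=; rewrite ?mulrN mulfV.
Qed.

Lemma sgg_sq g N (i : 'I_N) : (g = Symp -> ~~ odd N) -> sgg g i * sgg g i = 1.
Proof.
case: g => [|/(_ erefl) hN] /=; rewrite ?mulr1 //.
rewrite /sgnI -intrM; have := lab_neq0 i hN.
by case: sgrP.
Qed.

Lemma sum1_eq N (k : 'I_N) (F : 'I_N -> algC) :
  \sum_(j < N) (j == k)%:R * F j = F k.
Proof.
rewrite (bigD1 k) //= eqxx mul1r big1 ?addr0 // => j /negbTE ->.
by rewrite mul0r.
Qed.

Lemma sum1_eq' N (k : 'I_N) (F : 'I_N -> algC) :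
  \sum_(j < N) (k == j)%:R * F j = F k.
Proof. by rewrite -(sum1_eq k F); apply: eq_bigr => j _; rewrite eq_sym. Qed.

Lemma actE N m (i j : 'I_N) B (T : T1 N m) a w :
  act (delta_mx i j) B T (a, w) = (a == i)%:R * B (slice T j) w.
Proof.
rewrite ffunE (bigD1 j) //= big1 => [|b /negbTE hb]; last by rewrite !mxE hb andbF mul0r.
by rewrite !mxE eqxx andbT addr0.
Qed.

Section S.
Variables (N m : nat).
Implicit Types (T : T1 N m) (w : word N m) (p q r : 'I_m).

Lemma setwE w p k q : setw w p k q = if q == p then k else w q.
Proof. by rewrite ffunE. Qed.

Lemma setw_id w p k : setw (setw w p k) p k = setw w p k. 
Proof. by apply/ffunP => s; rewrite !ffunE; case: eqP. Qed.

Lemma setwSS w p x y : setw (setw w p x) p y = setw w p y.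
Proof. by apply/ffunP => s; rewrite !ffunE; case: eqP. Qed.

Lemma setwC w p q x y : p != q -> setw (setw w p x) q y = setw (setw w q y) p x.
Proof.
move=> hpq; apply/ffunP => s; rewrite !ffunE.
case: (eqVneq s q) => [->|hq]; case: (eqVneq _ p) => [hp|hp] //.
by rewrite hp eqxx in hpq.
Qed.

Lemma setw_at w p k : setw w p k p = k.
Proof. by rewrite ffunE eqxx. Qed.

Lemma setw_ne w p k q : q != p -> setw w p k q = w q.
Proof. by rewrite ffunE => /negbTE ->. Qed.

Lemma setw_self w p : setw w p (w p) = w.
Proof. by apply/ffunP => s; rewrite !ffunE; case: eqP => // ->. Qed.

Definition Pf T a w := \sum_(p < m) T (w p, setw w p a).
Definition Qf g T a w := \sum_(p < m) (w p == neg a)%:R *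
   \sum_(j < N) eps g a j * T (j, setw w p (neg j)).

Lemma EopE u T a w : Eop u T (a, w) = - u * T (a, w) + Pf T a w.
Proof.
rewrite /Eop !ffunE sum_ffunE; congr (_ + _).
rewrite (eq_bigr (fun i => (a == i)%:R * \sum_(j < N) rhoE j i (slice T j) w)); last first.
  by move=> i _; rewrite sum_ffunE mulr_sumr; apply: eq_bigr => j _; rewrite actE.
rewrite sum1_eq' /Pf; under eq_bigr do rewrite ffunE.
rewrite [LHS]exchange_big /=; apply: eq_bigr => p _.
by rewrite (eq_bigr (fun j => (w p == j)%:R * T (j, setw w p a))) ?sum1_eq' // => j _; rewrite ffunE.
Qed.

Lemma EtilE g u T a w : Etil g u T (a, w) = - u * T (a, w) + Qf g T a w.
Proof.
rewrite /Etil !ffunE sum_ffunE; congr (_ + _).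
rewrite (eq_bigr (fun i => (a == i)%:R * \sum_(j < N) eps g i j * rhoE (neg i) (neg j) (slice T j) w)); last first.
  by move=> i _; rewrite sum_ffunE mulr_sumr; apply: eq_bigr => j _; rewrite ffunE actE mulrCA.
rewrite sum1_eq' /Qf; under eq_bigr do rewrite ffunE mulr_sumr.
rewrite [LHS]exchange_big /=; apply: eq_bigr => p _.
rewrite mulr_sumr; apply: eq_bigr => j _; rewrite !ffunE; ring.
Qed.

Lemma FopE g u T a w : Fop g u T (a, w) = (- u - eta g) * T (a, w) + Pf T a w - Qf g T a w.
Proof.
rewrite /Fop !ffunE sum_ffunE -addrA; congr (_ + _).
rewrite (eq_bigr (fun i => (a == i)%:R * \sum_(j < N) rhoF g j i (slice T j) w)); last first.
  by move=> i _; rewrite sum_ffunE mulr_sumr; apply: eq_bigr => j _; rewrite actE.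
rewrite sum1_eq' /Pf /Qf; under eq_bigr do rewrite !ffunE.
rewrite sumrB; congr (_ - _).
  rewrite [LHS]exchange_big /=; apply: eq_bigr => p _.
  by rewrite (eq_bigr (fun j => (w p == j)%:R * T (j, setw w p a))) ?sum1_eq' // => j _; rewrite ffunE.
under eq_bigr do rewrite mulr_sumr.
rewrite [LHS]exchange_big /=; apply: eq_bigr => p _.
rewrite mulr_sumr; apply: eq_bigr => j _; rewrite !ffunE !epsE; ring.
Qed.

End S.

Section D.
Variables (g : grp) (N m : nat).
Implicit Types (T : T1 N m) (t : T0 N m) (w : word N m) (p q r : 'I_m).

Lemma contrE t w p q :
  \sum_(i < N) \sum_(j < N) form g i j * t (setw (setw w p i) q j)
  = \sum_(i < N) sgg g i * t (setw (setw w p i) q (neg i)).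
Proof.
apply: eq_bigr => i _; under eq_bigr do rewrite formE mulrAC.
by rewrite -mulr_suml sum1_eq mulrC.
Qed.

Lemma tlE t : traceless g t -> forall p q, p != q -> forall w,
  \sum_(i < N) sgg g i * t (setw (setw w p i) q (neg i)) = 0.
Proof. by move=> h p q hpq w; rewrite -contrE h. Qed.

Lemma tlI t : (forall p q, p != q -> forall w,
  \sum_(i < N) sgg g i * t (setw (setw w p i) q (neg i)) = 0) -> traceless g t.
Proof. by move=> h p q hpq w; rewrite contrE h. Qed.

Lemma reneg (F : 'I_N -> algC) : \sum_(j < N) F j = \sum_(j < N) F (neg j).
Proof. exact: (reindex_inj (@neg_inj N)). Qed.

Lemma key T (HT : inCV g T) a w p :
  \sum_(j < N) eps g a j * Pf T j (setw w p (neg j))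
  = cg g * \sum_(j < N) eps g a j * T (j, setw w p (neg j)).
Proof.
have E : forall j, Pf T j (setw w p (neg j)) = T (neg j, setw w p j) +
   \sum_(q < m | q != p) T (w q, setw (setw w p (neg j)) q j).
  move=> j; rewrite /Pf (bigD1 p) //= setw_at setwSS; congr (_ + _).
  by apply: eq_bigr => q hq; rewrite setw_ne.
under eq_bigr do rewrite E mulrDr.
rewrite big_split /= [X in X + _]reneg.
rewrite [X in _ + X](_ : _ = 0) ?addr0.
  rewrite mulr_sumr; apply: eq_bigr; move=> j _.
  by rewrite (negK j) !epsE sgg_neg; ring.
under eq_bigr do rewrite mulr_sumr.
rewrite exchange_big /=; apply: big1 => q hq.
under eq_bigr do rewrite epsE -mulrA.
rewrite -mulr_sumr reneg.
under eq_bigr do rewrite negK sgg_neg -mulrA.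
rewrite -mulr_sumr.
have := tlE (HT (w q)) (p := p) (q := q) _ w.
rewrite eq_sym hq => /(_ isT) h.
rewrite (_ : \sum_(i < N) _ = 0) ?mulr0 //.
by rewrite -[RHS]h; apply: eq_bigr => i _; rewrite ffunE.
Qed.

End D.

Section E.
Variables (g : grp) (N m : nat).
Hypothesis Hg : g = Symp -> ~~ odd N.
Implicit Types (T : T1 N m) (t : T0 N m) (w : word N m) (p q r : 'I_m).

Lemma setw3 w p q r x y z : r != p -> r != q ->
  setw (setw (setw w p x) q y) r z = setw (setw (setw w r z) p x) q y.
Proof.
move=> hp hq; apply/ffunP => s; rewrite !ffunE.
case: (eqVneq s r) => [->|hr]; first by rewrite (negbTE hp) (negbTE hq).
by [].
Qed.

Lemma setwp w p q x y z : p != q ->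
  setw (setw (setw w p x) q y) p z = setw (setw w p z) q y.
Proof. by move=> hpq; rewrite (setwC _ _ _ hpq) setwSS setwC // eq_sym. Qed.

Lemma vp w p q i : p != q -> setw (setw w p i) q (neg i) p = i.
Proof. by move=> hpq; rewrite setw_ne 1?setw_at. Qed.

Lemma PQ T (HT : inCV g T) a w p q : p != q ->
  \sum_(i < N) sgg g i * Pf T a (setw (setw w p i) q (neg i)) =
  \sum_(i < N) sgg g i * Qf g T a (setw (setw w p i) q (neg i)).
Proof.
move=> hpq.
have hqp : q != p by rewrite eq_sym.
rewrite /Pf /Qf; under eq_bigr do rewrite mulr_sumr.
under [RHS]eq_bigr do rewrite mulr_sumr.
rewrite [LHS]exchange_big [RHS]exchange_big /=.
rewrite [LHS](bigD1 p) // [RHS](bigD1 p) //=.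
rewrite [X in _ + X = _](bigD1 q) // [X in _ = _ + X](bigD1 q) //=.
rewrite [X in _ + (_ + X) = _]big1; last first.
  move=> r /andP [hrp hrq]; have := tlE (HT (w r)) hpq (setw w r a).
  move=> h; rewrite -[RHS]h; apply: eq_bigr => i _.
  by rewrite (setw_ne _ _ hrq) (setw_ne _ _ hrp) (setw3 _ _ _ _ hrp hrq) ffunE.
rewrite [X in _ = _ + (_ + X)]big1; last first.
  move=> r /andP [hrp hrq].
  under eq_bigr => i _ do rewrite (setw_ne _ _ hrq) (setw_ne _ _ hrp) mulrCA.
  rewrite -mulr_sumr; case: eqP => _; last by rewrite mul0r.
  rewrite mul1r; under eq_bigr do rewrite mulr_sumr.
  rewrite [LHS]exchange_big /=; apply: big1 => j _.
  under eq_bigr do rewrite mulrCA.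
  rewrite -mulr_sumr.
  have := tlE (HT j) hpq (setw w r (neg j)).
  move=> h; rewrite [X in _ * X = _](_ : _ = 0) ?mulr0 //.
  by rewrite -[RHS]h; apply: eq_bigr => i _; rewrite (setw3 _ _ _ _ hrp hrq) ffunE.
rewrite !addr0 addrC; congr (_ + _).
- (* Pq = Qp *)
  have hs := sgg_sq a Hg.
  under eq_bigr do rewrite setw_at setwSS.
  under [RHS]eq_bigr do rewrite (vp _ _ hpq) mulrA [_ * (_ == _)%:R]mulrC -mulrA.
  rewrite sum1_eq reneg mulr_sumr; apply: eq_bigr => j _.
  rewrite negK (setwp _ _ _ _ hpq) !epsE !sgg_neg negK.
  by rewrite -[LHS]mul1r -{1}hs; ring.
- (* Pp = Qq *)
  have hs := sgg_sq a Hg.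
  under eq_bigr do rewrite (vp _ _ hpq) (setwp _ _ _ _ hpq).
  under [RHS]eq_bigr do rewrite setw_at (inj_eq (@neg_inj N)) mulrA [_ * (_ == _)%:R]mulrC -mulrA.
  rewrite sum1_eq mulr_sumr; apply: eq_bigr => j _.
  by rewrite setwSS !epsE -[LHS]mul1r -{1}hs; ring.
Qed.

End E.

Lemma QfY g N m (T : T1 N m) (HT : inCV g T) v a w :
  Qf g (Eop v T) a w = (cg g - v) * Qf g T a w.
Proof.
rewrite /Qf mulr_sumr; apply: eq_bigr => p _.
under eq_bigr do rewrite EopE mulrDr.
rewrite big_split /= key //.
have -> : \sum_(j < N) eps g a j * (- v * T (j, setw w p (neg j)))
   = - v * \sum_(j < N) eps g a j * T (j, setw w p (neg j)).
  by rewrite mulr_sumr; apply: eq_bigr => j _; ring.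
ring.
Qed.

Lemma FopCV g N m (Hg : g = Symp -> ~~ odd N) (T : T1 N m) (HT : inCV g T) u :
  inCV g (Fop g u T).
Proof.
move=> a; apply: tlI => p q hpq w.
under eq_bigr do rewrite ffunE FopE !mulrDr mulrN.
rewrite sumrB big_split /= (PQ Hg HT a w hpq) addrK.
have := tlE (HT a) hpq w.
move=> h; under eq_bigr do rewrite mulrCA.
rewrite -mulr_sumr [X in _ * X](_ : _ = 0) ?mulr0 //.
by rewrite -[RHS]h; apply: eq_bigr => i _; rewrite ffunE.
Qed.

Unset Implicit Arguments.
Theorem lemma2p3 (g : grp) (N m : nat) (Hm : (0 < m)%N)
  (Hg : g = Symp -> ~~ odd N)
  (u : algC) (Hu : u != eta g) (T : T1 N m) (HT : inCV g T) :
  let X := scl (u - eta g)^-1 (Etil g (eta g - u) (Eop (eta g + u) T)) in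
  inCV g X /\ X = Fop g u T.
Proof.
move=> X.
suff E : X = Fop g u T by split => //; rewrite E; exact: FopCV.
apply/ffunP => -[a w]; rewrite /X ffunE EtilE QfY // !EopE FopE cg_eta.
have hu : u - eta g != 0 by rewrite subr_eq0.
by field.
Qed.
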